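(* Let $m\ge 2$ be an integer and let $P=(A_1,A_2,\dots,A_{m+1})$ be a cyclic $(m+1)$-gon (distinct vertices on a circle) with vertices ordered anticlockwise. Then \[ S_{1,m,m+1}\prod_{i=2}^{m-1} x_{i,m+1} = \sum_{j=1}^{m-1} S_{j,j+1,m+1}\, \frac{\prod_{k=1}^{m} x_{k,m+1}}{x_{j,m+1}\,x_{j+1,m+1}}. \]
   Context: For points $A_p=(x_p,y_p)$, $x_{pq}:=(x_q-x_p)^2+(y_q-y_p)^2$ is the squared distance between $A_p$ and $A_q$, and $S_{pqr}:=2[(x_q-x_p)(y_r-y_p)-(y_q-y_p)(x_r-x_p)]$ is four times the signed area of the triangle $A_pA_qA_r$. An empty product equals $1$. *)

(* Defs.v *)
From mathcomp Require Import all_boot all_order all_algebra.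
From mathcomp Require Import all_classical all_reals all_analysis.
Set Implicit Arguments. Unset Strict Implicit. Unset Printing Implicit Defensive.
Import Order.TTheory GRing.Theory Num.Theory.
Local Open Scope ring_scope.

Definition sqdist (R : realType) (A : nat -> R * R) (p q : nat) : R :=
  ((A q).1 - (A p).1) ^+ 2 + ((A q).2 - (A p).2) ^+ 2.

(* S_{pqr}: four times the signed area of triangle A_p A_q A_r *)
Definition sarea (R : realType) (A : nat -> R * R) (p q r : nat) : R :=
  2 * (((A q).1 - (A p).1) * ((A r).2 - (A p).2)
       - ((A q).2 - (A p).2) * ((A r).1 - (A p).1)).

Definition cyclic_anticlockwise (R : realType) (n : nat) (A : nat -> R * R) : Prop :=
  (forall i j, (1 <= i <= n)%N -> (1 <= j <= n)%N -> i <> j -> A i <> A j) /\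
  exists (c : R * R) (r : R) (theta : nat -> R),
    0 < r /\
    (forall i, (1 <= i <= n)%N ->
       A i = (c.1 + r * cos (theta i), c.2 + r * sin (theta i))) /\
    (forall i, (1 <= i < n)%N -> theta i < theta i.+1) /\
    theta n < theta 1%N + 2 * pi.

(* Main.v *)
Set Warnings "-all".
Require Import Defs.
From mathcomp Require Import all_boot all_order all_algebra.
From mathcomp Require Import all_classical all_reals all_analysis.
From mathcomp Require Import ring lra.
Import Order.TTheory GRing.Theory Num.Theory.
Local Open Scope ring_scope.

Lemma key_id (R : realType) (A : nat -> R * R) (i j P : nat) (w1 w2 : R) :
  sqdist A i P = 2 * (((A i).1 - (A P).1) * w1 + ((A i).2 - (A P).2) * w2) ->
  sqdist A j P = 2 * (((A j).1 - (A P).1) * w1 + ((A j).2 - (A P).2) * w2) ->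
  sarea A i j P * (w1 ^+ 2 + w2 ^+ 2) =
  sqdist A i P * (((A j).1 - (A P).1) * (- w2) + ((A j).2 - (A P).2) * w1)
  - sqdist A j P * (((A i).1 - (A P).1) * (- w2) + ((A i).2 - (A P).2) * w1).
Proof. move=> -> ->; rewrite /sarea; ring. Qed.

Theorem theorem2p9 (R : realType) (m : nat) (A : nat -> R * R) :
  (2 <= m)%N ->
  cyclic_anticlockwise m.+1 A ->
  sarea A 1 m m.+1 * \prod_(2 <= i < m) sqdist A i m.+1
  = \sum_(1 <= j < m)
      sarea A j j.+1 m.+1 *
      ((\prod_(1 <= k < m.+1) sqdist A k m.+1)
       / (sqdist A j m.+1 * sqdist A j.+1 m.+1)).
Proof.
move=> hm [hdist [c [r [th [hr [hA _]]]]]].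
set P := m.+1.
set w1 := c.1 - (A P).1.
set w2 := c.2 - (A P).2.
set x := fun k => sqdist A k P.
have hAP : A P = (c.1 + r * cos (th P), c.2 + r * sin (th P)).
  by apply: hA; rewrite /P leqnn andbT.
have hx : forall k, (1 <= k <= m)%N ->
   sqdist A k P = 2 * (((A k).1 - (A P).1) * w1 + ((A k).2 - (A P).2) * w2).
  move=> k hk.
  have hAk : A k = (c.1 + r * cos (th k), c.2 + r * sin (th k)).
    apply: hA; move: hk; rewrite /P; case/andP=> -> /= h; exact: leqW.
  rewrite /w1 /w2 /sqdist hAk hAP /=.
  apply/eqP; rewrite -subr_eq0; apply/eqP.
  transitivity (r ^+ 2 * ((cos (th k) ^+ 2 + sin (th k) ^+ 2)
                  - (cos (th P) ^+ 2 + sin (th P) ^+ 2))); first ring.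
  by rewrite !cos2Dsin2 subrr mulr0.
have hN : w1 ^+ 2 + w2 ^+ 2 = r ^+ 2.
  rewrite /w1 /w2 hAP /=.
  transitivity (r ^+ 2 * (cos (th P) ^+ 2 + sin (th P) ^+ 2)); first ring.
  by rewrite cos2Dsin2 mulr1.
have hr2 : r ^+ 2 != 0 by rewrite expf_neq0 // gt_eqF.
have hx0 : forall k, (1 <= k <= m)%N -> x k != 0.
  move=> k hk; apply/eqP => h0.
  have hkP : A k <> A P.
    apply: hdist => //; first by move: hk; case/andP=> -> /= h; exact: leqW.
      by rewrite /P leqnn andbT.
    by move=> e; move: hk; rewrite e /P ltnn andbF.
  apply: hkP.
  move: h0; rewrite /x /sqdist => /eqP.
  rewrite paddr_eq0 ?sqr_ge0 // !sqrf_eq0 !subr_eq0 => /andP[/eqP e1 /eqP e2].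
  by case: (A k) (A P) e1 e2 => a b [a' b'] /= -> ->.
set G := fun k => (((A k).1 - (A P).1) * (- w2) + ((A k).2 - (A P).2) * w1) / x k.
have hS : forall i j, (1 <= i <= m)%N -> (1 <= j <= m)%N ->
    sarea A i j P = x i * x j * (G j - G i) / r ^+ 2.
  move=> i j hi hj.
  apply: (mulIf hr2); rewrite -hN (@key_id _ _ _ _ _ _ _ (hx i hi) (hx j hj)) hN mulfVK //.
  rewrite /G -/(x i) -/(x j); field.
  by rewrite (hx0 i hi) (hx0 j hj).
set Pr := \prod_(1 <= k < m.+1) sqdist A k P.
have hPr : Pr = x 1%N * (\prod_(2 <= i < m) x i) * x m.
  rewrite /Pr {1}/P big_ltn //; last exact: ltnW.
  rewrite big_nat_recr //= mulrA.
  by [].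
transitivity (\sum_(1 <= j < m) (G j.+1 - G j) * Pr / r ^+ 2).
  rewrite -big_distrl /= -big_distrl /= telescope_sumr; last exact: ltnW.
  rewrite hPr hS //; last by rewrite leqnn andbT ltnW.
  field; rewrite ?hr2 ?gt_eqF //.
  by apply: ltnW.
apply: eq_big_nat => j /andP[hj1 hjm].
rewrite hS //; last by rewrite hj1 ltnW.
have h1 : x j != 0 by apply: hx0; rewrite hj1 ltnW.
have h2 : x j.+1 != 0 by apply: hx0; rewrite hjm andbT.
rewrite -/(x j) -/(x j.+1).
field; rewrite ?h1 ?h2 ?hr2 ?gt_eqF //.
Qed.
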